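(* Let $V$ be an $R$-module and $A=\Gamma_R(V)$ the free $DP$ algebra on $V$. Then the indecomposable quotient of $A$ is $A/A^2\cong U(0)\otimes_R V$, where $A^2$ is the $R$-submodule spanned by products $ab$, $a,b\in A$.
   Context: Fix a commutative unital ring $R$. An ''algebra'' means a commutative, not necessarily unital, $R$-algebra. A $DP$ algebra is an algebra $A$ with maps $\gamma_n:A\to A$ ($n\ge1$) such that for all $a,b\in A$, $r\in R$, $m,n\ge1$: $\gamma_1(a)=a$; $\gamma_n(a+b)=\gamma_n(a)+\sum_{i+j=n,\,i,j\ge1}\gamma_i(a)\gamma_j(b)+\gamma_n(b)$; $\gamma_n(ab)=a^n\gamma_n(b)$; $\gamma_n(rb)=r^n\gamma_n(b)$; $\gamma_m(a)\gamma_n(a)=\frac{(m+n)!}{m!\,n!}\gamma_{m+n}(a)$; $\gamma_m(\gamma_n(a))=\frac{(mn)!}{m!(n!)^m}\gamma_{mn}(a)$. $\Gamma_R(V)$ is the free $DP$ algebra on $V$. $U(0)$ is the unital ring generated by $R$ and symbols $\phi_p$ ($p$ prime), commuting with one another, subject to $p\phi_p=0$ and $\phi_pr=r^p\phi_p$ ($r\in R$); $U(0)\otimes_R V$ uses the right $R$-module structure of $U(0)$ and is a left $U(0)$-module. The isomorphism is one of abelian $DP$ algebras (left $U(0)$-modules), $\phi_p$ acting on $A/A^2$ via $\gamma_p$. *)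

(* Defs.v *)
From HB Require Import structures.
From mathcomp Require Import all_boot all_order all_algebra.
Set Implicit Arguments. Unset Strict Implicit. Unset Printing Implicit Defensive.
Import GRing.Theory.
Local Open Scope ring_scope.

Definition is_Rlin (R : comPzRingType) (U W : lmodType R) (f : U -> W) : Prop :=
  (forall x y, f (x + y) = f x + f y) /\ (forall (r : R) x, f (r *: x) = r *: f x).

(* Positive powers in a non-unital algebra: npow mul a n = a^n for n >= 1. *)
Definition npow (A : Type) (mul : A -> A -> A) (a : A) (n : nat) : A :=
  iter n.-1 (mul a) a.

(* A DP algebra: commutative, not necessarily unital R-algebra with maps
   gamma_n (n >= 1; gamma 0 is unconstrained junk and never used). *)
Record dpalg (R : comPzRingType) := DPAlg {
  dp_car :> lmodType R;
  dp_mul : dp_car -> dp_car -> dp_car;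
  dp_gamma : nat -> dp_car -> dp_car;
  dp_mulA : forall a b c, dp_mul a (dp_mul b c) = dp_mul (dp_mul a b) c;
  dp_mulC : forall a b, dp_mul a b = dp_mul b a;
  dp_mulDl : forall a b c, dp_mul (a + b) c = dp_mul a c + dp_mul b c;
  dp_mulZl : forall (r : R) a b, dp_mul (r *: a) b = r *: dp_mul a b;
  dp_gamma1 : forall a, dp_gamma 1 a = a;
  dp_gammaD : forall n a b, (1 <= n)%N ->
    dp_gamma n (a + b) = dp_gamma n a
      + \sum_(1 <= i < n) dp_mul (dp_gamma i a) (dp_gamma (n - i) b)
      + dp_gamma n b;
  dp_gammaM : forall n a b, (1 <= n)%N ->
    dp_gamma n (dp_mul a b) = dp_mul (npow dp_mul a n) (dp_gamma n b);
  dp_gammaZ : forall n (r : R) b, (1 <= n)%N ->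
    dp_gamma n (r *: b) = r ^+ n *: dp_gamma n b;
  dp_gamma_mul : forall m n a, (1 <= m)%N -> (1 <= n)%N ->
    dp_mul (dp_gamma m a) (dp_gamma n a)
      = dp_gamma (m + n) a *+ ((m + n)`! %/ (m`! * n`!));
  dp_gamma_comp : forall m n a, (1 <= m)%N -> (1 <= n)%N ->
    dp_gamma m (dp_gamma n a)
      = dp_gamma (m * n) a *+ ((m * n)`! %/ (m`! * (n`! ^ m)))
}.

Arguments dp_gamma {R} d n _.
Arguments dp_mul {R d} _ _.
Definition is_dp_morph (R : comPzRingType) (A B : dpalg R) (h : A -> B) : Prop :=
  is_Rlin h /\
  (forall a b, h (dp_mul a b) = dp_mul (h a) (h b)) /\
  (forall n a, (1 <= n)%N -> h (dp_gamma A n a) = dp_gamma B n (h a)).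

(* (A, i) is the free DP algebra Gamma_R(V) on V (universal property). *)
Definition is_free_dp (R : comPzRingType) (V : lmodType R) (A : dpalg R)
    (i : V -> A) : Prop :=
  is_Rlin i /\
  forall (B : dpalg R) (g : V -> B), is_Rlin g ->
    (exists h : A -> B, is_dp_morph h /\ forall v, h (i v) = g v) /\
    (forall h1 h2 : A -> B, is_dp_morph h1 -> is_dp_morph h2 ->
       (forall v, h1 (i v) = g v) -> (forall v, h2 (i v) = g v) ->
       forall a, h1 a = h2 a).

Definition in_sq (R : comPzRingType) (A : dpalg R) (a : A) : Prop :=
  exists s : seq (R * A * A), a = \sum_(x <- s) (x.1.1 *: dp_mul x.1.2 x.2).

(* A left U(0)-module, U(0) being presented by generators R and phi_p
   (p prime) and relations p phi_p = 0, phi_p r = r^p phi_p, phi_p phi_q =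
   phi_q phi_p: an R-module with additive maps phi_p satisfying these. *)
Record u0mod (R : comPzRingType) := U0Mod {
  u0_car :> lmodType R;
  u0_phi : nat -> u0_car -> u0_car;
  u0_phiD : forall p x y, prime p -> u0_phi p (x + y) = u0_phi p x + u0_phi p y;
  u0_phiZ : forall p (r : R) x, prime p -> u0_phi p (r *: x) = r ^+ p *: u0_phi p x;
  u0_phi_char : forall p x, prime p -> u0_phi p x *+ p = 0;
  u0_phiC : forall p q x, prime p -> prime q ->
    u0_phi p (u0_phi q x) = u0_phi q (u0_phi p x)
}.

Arguments u0_phi {R} u p _.

Definition is_u0_lin (R : comPzRingType) (M N : u0mod R) (h : M -> N) : Prop :=
  is_Rlin h /\ forall p x, prime p -> h (u0_phi M p x) = u0_phi N p (h x).

(* (M, j) is U(0) (x)_R V with j v = 1 (x) v (extension of scalars,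
   universal property). *)
Definition is_u0_tensor (R : comPzRingType) (V : lmodType R) (M : u0mod R)
    (j : V -> M) : Prop :=
  is_Rlin j /\
  forall (N : u0mod R) (g : V -> N), is_Rlin g ->
    (exists h : M -> N, is_u0_lin h /\ forall v, h (j v) = g v) /\
    (forall h1 h2 : M -> N, is_u0_lin h1 -> is_u0_lin h2 ->
       (forall v, h1 (j v) = g v) -> (forall v, h2 (j v) = g v) ->
       forall m, h1 m = h2 m).

(* Main.v *)
Require Import Defs.
From HB Require Import structures.
From mathcomp Require Import all_boot all_order all_algebra.
From Stdlib Require Import Classical.
From mathcomp Require Import generic_quotient ring_quotient.
From Stdlib Require Import ClassicalEpsilon.
Local Open Scope quotient_scope.
Import GRing.Theory.
Local Open Scope ring_scope.
Set Implicit Arguments. Unset Strict Implicit.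

Lemma bin_dvd_p (p j t k : nat) : prime p -> (0 < t)%N -> (0 < k)%N -> (k < p ^ j)%N ->
  (p %| 'C(t * p ^ j, k))%N.
Proof.
move=> pp t0 k0 kN.
have e := mul_bin_diag (t * p ^ j) k.-1.
rewrite prednK // in e.
have hN : (p ^ j %| k * 'C(t * p ^ j, k))%N.
  by rewrite -e; apply: dvdn_mulr; apply: dvdn_mull.
apply/negPn/negP => nd.
have cop : coprime (p ^ j) 'C(t * p ^ j, k).
  by rewrite coprimeXl // prime_coprime.
rewrite Gauss_dvdl // in hN.
by have := dvdn_leq k0 hN; rewrite leqNgt kN.
Qed.

Section Tor.
Variables (Z : zmodType) (p : nat) (x : Z).
Hypothesis pp : prime p.
Hypothesis xp : x *+ p = 0.

Lemma tor_dvd c : (p %| c)%N -> x *+ c = 0.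
Proof. by move/dvdnP=> [d ->]; rewrite mulnC mulrnA xp mul0rn. Qed.

Lemma tor_mod c : x *+ c = x *+ (c %% p).
Proof.
rewrite {1}(divn_eq c p) mulrnDr.
by rewrite (tor_dvd (dvdn_mull _ (dvdnn p))) add0r.
Qed.

Lemma tor_alt j t k : (0 < t)%N -> (k < p ^ j)%N ->
  x *+ 'C(t * p ^ j - 1, k) = if odd k then - x else x.
Proof.
move=> t0; elim: k => [|k IH] kN; first by rewrite bin0.
have n0 : (0 < t * p ^ j)%N by rewrite muln_gt0 t0 expn_gt0 prime_gt0.
have := binS (t * p ^ j - 1) k.
rewrite subn1 prednK // => e.
have h0 : x *+ 'C(t * p ^ j, k.+1) = 0.
  by apply: tor_dvd; apply: bin_dvd_p.
rewrite e mulrnDr -(subn1 (t * p ^ j)) IH ?(ltnW kN) // in h0.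
rewrite /= -subn1.
move/eqP: h0; rewrite addr_eq0 => /eqP ->.
by case: (odd k) => //=; rewrite opprK.
Qed.

Lemma tor_one j t : (0 < t)%N -> x *+ 'C(t * p ^ j - 1, p ^ j - 1) = x.
Proof.
move=> t0; have pj0 : (0 < p ^ j)%N by rewrite expn_gt0 prime_gt0.
rewrite tor_alt //; last by rewrite subn1 prednK.
case: ifP => // od.
have [p2|p2] := eqVneq p 2%N.
  by apply/eqP; rewrite eq_sym -subr_eq0 opprK -mulr2n -p2 xp.
have po : odd p.
  by case: (even_prime pp) => // e; rewrite e in p2.
by move: od; rewrite oddB // oddX po orbT.
Qed.

End Tor.

From mathcomp Require Import ring.

Definition Pc (N t : nat) : nat := (\prod_(1 <= s < t.+1) 'C(s * N - 1, N - 1))%N.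

Lemma binN (N t : nat) : (0 < N)%N ->
  'C(t.+1 * N, N) = (t.+1 * 'C(t.+1 * N - 1, N - 1))%N.
Proof.
move=> N0; have e := mul_bin_diag (t.+1 * N) N.-1.
rewrite prednK // in e.
apply/eqP; rewrite -(eqn_pmul2l N0) -e !subn1.
by apply/eqP; ring.
Qed.

Lemma Pfact (N t : nat) : (0 < N)%N -> (Pc N t * (t`! * N`! ^ t))%N = (t * N)`!.
Proof.
move=> N0; elim: t => [|t IH].
  by rewrite /Pc big_geq.
rewrite /Pc big_nat_recr //= -/(Pc N t).
have bf := @bin_fact (t.+1 * N) N.
rewrite mulSn addKn leq_addr in bf.
rewrite -(bf isT) binN // factS expnS -IH.
ring.
Qed.

Lemma Pc_div (N t : nat) : (0 < N)%N -> ((t * N)`! %/ (t`! * N`! ^ t))%N = Pc N t.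
Proof.
move=> N0; by rewrite -Pfact // mulnK // muln_gt0 fact_gt0 expn_gt0 fact_gt0.
Qed.

Section Tor2.
Variables (Z : zmodType) (p : nat) (x : Z).
Hypothesis pp : prime p.
Hypothesis xp : x *+ p = 0.

Lemma tor_P j t : x *+ Pc (p ^ j) t = x.
Proof.
elim: t => [|t IH]; first by rewrite /Pc big_geq.
rewrite /Pc big_nat_recr //= -/(Pc _ t) mulrnA IH.
exact: tor_one.
Qed.

Lemma tor_Ccomp j t : x *+ 'C(t * p ^ j, p ^ j) = x *+ t.
Proof.
case: t => [|t]; first by rewrite mul0n bin0n expn_eq0; case: (p =P 0%N) pp => [->|]. 
rewrite binN ?expn_gt0 ?prime_gt0 // mulnC mulrnA tor_one //.
Qed.
End Tor2.

Lemma tor_gcd (Z : zmodType) (x : Z) a b : x *+ a = 0 -> x *+ b = 0 -> x *+ gcdn a b = 0.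
Proof.
move=> ha hb; case: (posnP a) => [->|a0]; first by rewrite gcd0n.
case: (egcdnP b a0) => km kn e _.
have : x *+ (km * a)%N = x *+ (kn * b + gcdn a b)%N by rewrite e.
by rewrite mulrnDr [(km * a)%N]mulnC [(kn * b)%N]mulnC !mulrnA ha hb !mul0rn add0r => <-.
Qed.

Lemma tor_coprime (Z : zmodType) (x : Z) a b : coprime a b -> x *+ a = 0 -> x *+ b = 0 -> x = 0.
Proof. by move=> /eqP c ha hb; have := tor_gcd ha hb; rewrite c. Qed.


Definition isPP (n : nat) := exists p k, [/\ prime p, (0 < k)%N & n = (p ^ k)%N].

Lemma isPP_dvd (d n : nat) : (1 < d)%N -> (d %| n)%N -> isPP n -> isPP d.
Proof.
move=> d1 dn [p [k [pp k0 e]]]; rewrite e in dn.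
case/(dvdn_pfactor _ _ pp): dn => l _ de; rewrite de in d1 *.
exists p, l; split => //; by case: l d1 {de}.
Qed.

Lemma notPP_mixed p q i j : prime p -> prime q -> p != q -> (0 < i)%N -> (0 < j)%N ->
  ~ isPP (p ^ i * q ^ j).
Proof.
move=> pp pq pq' i0 j0 [r [k [pr k0 e]]].
have hp : (p %| r)%N.
  have : (p %| r ^ k)%N by rewrite -e; apply: dvdn_mulr; rewrite dvdn_exp.
  by rewrite Euclid_dvdX // => /andP[].
have hq : (q %| r)%N.
  have : (q %| r ^ k)%N by rewrite -e; apply: dvdn_mull; rewrite dvdn_exp.
  by rewrite Euclid_dvdX // => /andP[].
rewrite dvdn_prime2 // in hp; rewrite dvdn_prime2 // in hq.
by move: pq'; rewrite (eqP hp) (eqP hq) eqxx.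
Qed.

Section ZeroDP.
Variables (R : comPzRingType) (M : u0mod R).

Definition F (p k : nat) (x : M) : M := iter k (u0_phi M p) x.

Lemma F_add p k x y : prime p -> F p k (x + y) = F p k x + F p k y.
Proof. by move=> pp; elim: k => //= k IH; rewrite /F /= in IH *; rewrite IH u0_phiD. Qed.

Lemma F_scale p k (r : R) x : prime p -> F p k (r *: x) = r ^+ (p ^ k) *: F p k x.
Proof.
move=> pp; elim: k => [|k IH]; first by rewrite expn0 expr1.
by rewrite /F /= in IH *; rewrite IH u0_phiZ // -exprM expnSr.
Qed.

Lemma F0 p k : prime p -> F p k 0 = 0.
Proof. move=> pp; have h := @F_add p k 0 0 pp; rewrite addr0 in h. by apply: (addrI (F p k 0)); rewrite addr0 -h. Qed.

Lemma F_tor p k x : prime p -> (0 < k)%N -> F p k x *+ p = 0.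
Proof. by move=> pp; case: k => // k _; rewrite /F /= u0_phi_char. Qed.

Lemma F_comm p q k x : prime p -> prime q -> u0_phi M q (F p k x) = F p k (u0_phi M q x).
Proof. by move=> pp pq; elim: k => //= k IH; rewrite /F /= in IH *; rewrite u0_phiC // IH. Qed.

Lemma F_mixed p q i j x : prime p -> prime q -> p != q -> (0 < i)%N -> (0 < j)%N ->
  F p i (F q j x) = 0.
Proof.
move=> pp pq pq' i0 j0.
apply: (@tor_coprime _ _ p q); first by rewrite prime_coprime // dvdn_prime2 // (negbTE pq').
  exact: F_tor.
case: j j0 => // j _.
by change (F q j.+1 x) with (u0_phi M q (F q j x)); rewrite -F_comm // u0_phi_char.
Qed.

Definition zgam (n : nat) (x : M) : M :=
  if n == 1%N then x
  else if (1 < n)%N && (n == pdiv n ^ logn (pdiv n) n)%N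
       then F (pdiv n) (logn (pdiv n) n) x else 0.

Lemma zgam_pp p k x : prime p -> (0 < k)%N -> zgam (p ^ k) x = F p k x.
Proof.
move=> pp; case: k => // k _.
have p1 : (1 < p ^ k.+1)%N by rewrite -(exp1n k.+1) ltn_exp2r // prime_gt1.
rewrite /zgam gtn_eqF // p1 pdiv_pfactor // pfactorK // eqxx //.
Qed.

Lemma zgam_npp n x : n != 1%N -> ~ isPP n -> zgam n x = 0.
Proof.
move=> n1 np; rewrite /zgam (negbTE n1); case: ifP => // /andP[n2 /eqP e].
exfalso; apply: np; exists (pdiv n), (logn (pdiv n) n); split => //.
  exact: pdiv_prime.
by case: (logn _ _) e => // e; move: n1; rewrite e expn0 eqxx.
Qed.

Lemma zgam1 x : zgam 1 x = x. Proof. by []. Qed.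

Lemma zgam_case n : (1 < n)%N -> (exists p k, [/\ prime p, (0 < k)%N, n = (p ^ k)%N & forall x, zgam n x = F p k x])
   \/ (~ isPP n /\ forall x, zgam n x = 0).
Proof.
move=> n1; case: (classic (isPP n)) => [[p [k [pp k0 e]]]|np].
  by left; exists p, k; split => // x; rewrite e zgam_pp.
by right; split => // x; apply: zgam_npp => //; rewrite gtn_eqF.
Qed.

Lemma zgam_add n x y : (0 < n)%N -> zgam n (x + y) = zgam n x + zgam n y.
Proof.
case: n => // -[|n] _ //.
case: (zgam_case (isT : (1 < n.+2)%N)) => [[p [k [pp _ _ h]]]|[_ h]].
  by rewrite !h F_add.
by rewrite !h addr0.
Qed.

Lemma zgam0 n : (0 < n)%N -> zgam n 0 = 0.
Proof. move=> n0; have h := @zgam_add n 0 0 n0; rewrite addr0 in h. by apply: (addrI (zgam n 0)); rewrite addr0 -h. Qed.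


Lemma zgam_scale n (r : R) x : (0 < n)%N -> zgam n (r *: x) = r ^+ n *: zgam n x.
Proof.
case: n => // -[|n] _; first by rewrite !zgam1 expr1.
case: (zgam_case (isT : (1 < n.+2)%N)) => [[p [k [pp _ e h]]]|[_ h]].
  by rewrite !h F_scale // e.
by rewrite !h scaler0.
Qed.

Lemma zgam_mul m n a : (1 <= m)%N -> (1 <= n)%N ->
  (0 : M) = zgam (m + n) a *+ ((m + n)`! %/ (m`! * n`!)).
Proof.
move=> m1 n1.
have mn1 : (1 < m + n)%N by rewrite -(addn1 1) leq_add.
case: (zgam_case mn1) => [[p [k [pp k0 e h]]]|[_ h]]; last by rewrite h mul0rn.
have e2 : ((m + n)`! %/ (m`! * n`!) = 'C(m + n, m))%N by rewrite bin_factd ?addn_gt0 ?m1 // addKn.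
rewrite h e2.
rewrite (@tor_dvd _ p) //; first exact: F_tor.
rewrite e -(mul1n (p ^ k)%N); apply: bin_dvd_p => //.
by rewrite -e -{1}(addn0 m) ltn_add2l.
Qed.

Lemma fact1' : 1`! = 1%N. Proof. by []. Qed.

Lemma zgam_comp m n a : (1 <= m)%N -> (1 <= n)%N ->
  zgam m (zgam n a) = zgam (m * n) a *+ ((m * n)`! %/ (m`! * (n`! ^ m))).
Proof.
case: m => // -[|m] _ .
  by rewrite zgam1 mul1n fact1' mul1n expn1 divnn fact_gt0.
case: n => // -[|n] _ .
  by rewrite zgam1 muln1 fact1' exp1n muln1 divnn fact_gt0.
set m' := m.+2; set n' := n.+2.
have mn1 : (1 < m' * n')%N by rewrite (@leq_trans n') // leq_pmull.
case: (zgam_case (isT : (1 < n')%N)) => [[p [k [pp k0 en hn]]]|[nn hn]]; last first.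
  rewrite hn zgam0 // zgam_npp; first by rewrite mul0rn.
    by rewrite gtn_eqF.
  by move/(isPP_dvd (isT : (1 < n')%N) (dvdn_mull _ (dvdnn _))).
case: (zgam_case (isT : (1 < m')%N)) => [[q [l [pq l0 em hm]]]|[nm hm]]; last first.
  rewrite hm zgam_npp; first by rewrite mul0rn.
    by rewrite gtn_eqF.
  by move/(isPP_dvd (isT : (1 < m')%N) (dvdn_mulr _ (dvdnn _))).
rewrite hn hm em en.
have [epq|npq] := eqVneq q p.
  rewrite epq Pc_div ?expn_gt0 ?prime_gt0 // -expnD zgam_pp ?addn_gt0 ?k0 ?orbT //.
  rewrite tor_P //; last by apply: F_tor => //; rewrite addn_gt0 k0 orbT.
  by rewrite /F -iterD addnC.
rewrite F_mixed // zgam_npp; first by rewrite mul0rn.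
  by rewrite -em -en gtn_eqF.
exact: notPP_mixed.
Qed.

Definition zDP : dpalg R.
refine (@DPAlg R M (fun _ _ => 0) zgam _ _ _ _ _ _ _ _ _ _).
- by [].
- by [].
- by move=> *; rewrite addr0.
- by move=> *; rewrite scaler0.
- by [].
- by move=> n a b n1; rewrite big1_eq addr0 zgam_add.
- by move=> n a b n1; rewrite zgam0.
- by move=> n r b n1; rewrite zgam_scale.
- by move=> m n a m1 n1; apply: zgam_mul.
- by move=> m n a m1 n1; apply: zgam_comp.
Defined.

Lemma zDP_gamma n x : dp_gamma zDP n x = zgam n x. Proof. by []. Qed.
Lemma zDP_mul (x y : zDP) : dp_mul x y = 0. Proof. by []. Qed.

End ZeroDP.

Section Sq.
Variables (R : comPzRingType) (A : dpalg R).

Lemma sq0 : in_sq (0 : A). Proof. by exists [::]; rewrite big_nil. Qed.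

Lemma sqD (a b : A) : in_sq a -> in_sq b -> in_sq (a + b).
Proof. by move=> [s ->] [t ->]; exists (s ++ t); rewrite big_cat. Qed.

Lemma sqZ (r : R) (a : A) : in_sq a -> in_sq (r *: a).
Proof.
move=> [s ->]; exists [seq (r * x.1.1, x.1.2, x.2) | x <- s].
by rewrite big_map scaler_sumr; apply: eq_bigr => x _; rewrite scalerA.
Qed.

Lemma sqN (a : A) : in_sq a -> in_sq (- a).
Proof. by move=> h; rewrite -scaleN1r; apply: sqZ. Qed.

Lemma sqM (a b : A) : in_sq (dp_mul a b).
Proof. by exists [:: (1, a, b)]; rewrite big_seq1 scale1r. Qed.

Lemma sq_sum (I : Type) (s : seq I) (F : I -> A) : (forall i, in_sq (F i)) -> in_sq (\sum_(i <- s) F i).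
Proof. move=> h; elim: s => [|x s IH]; first by rewrite big_nil; apply: sq0. by rewrite big_cons; apply: sqD. Qed.

Definition sqb (a : A) : bool := if excluded_middle_informative (in_sq a) then true else false.

Lemma sqbP a : reflect (in_sq a) (sqb a).
Proof. by rewrite /sqb; case: excluded_middle_informative => h; constructor. Qed.

Fact sq_zmod_closed : zmod_closed sqb.
Proof.
split; first by apply/sqbP; exact: sq0.
by move=> u v /sqbP hu /sqbP hv; apply/sqbP; apply: sqD => //; apply: sqN.
Qed.
End Sq.

HB.instance Definition _ R A := GRing.isZmodClosed.Build _ (@sqb R A) (@sq_zmod_closed R A).

Definition sqI R (A : dpalg R) : zmodClosed A := GRing.ZmodClosed.clone A (@sqb R A) _.
Notation QQ A := (Quotient.quot (sqI A)).

Section Q.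
Variables (R : comPzRingType) (A : dpalg R).
Definition q (a : A) : QQ A := \pi_(QQ A) a.

Lemma qD a b : q (a + b) = q a + q b. Proof. by rewrite /q !piE. Qed.
Lemma q0 : q 0 = 0. Proof. by rewrite /q piE. Qed.
Lemma qN a : q (- a) = - q a. Proof. by rewrite /q !piE. Qed.
Lemma qB a b : q (a - b) = q a - q b. Proof. by rewrite qD qN. Qed.
Lemma q_eq0 a : q a = 0 <-> in_sq a.
Proof.
rewrite -q0 /q; split.
  by move/eqP; rewrite -Quotient.idealrBE subr0 => /sqbP.
by move=> h; apply/eqP; rewrite -Quotient.idealrBE subr0; apply/sqbP.
Qed.
Lemma q_eq a b : q a = q b <-> in_sq (a - b).
Proof. by rewrite -q_eq0 qB; split => [->|/eqP]; rewrite ?subrr // subr_eq0 => /eqP. Qed.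
Lemma q_repr (y : QQ A) : q (repr y) = y. Proof. exact: reprK. Qed.
Lemma q_surj (y : QQ A) : exists a, y = q a. Proof. by exists (repr y); rewrite q_repr. Qed.

Definition qscale (r : R) (y : QQ A) : QQ A := q (r *: repr y).
Lemma qscaleE r a : qscale r (q a) = q (r *: a).
Proof.
rewrite /qscale; apply/q_eq; rewrite -scalerBr; apply: sqZ; apply/q_eq; exact: q_repr.
Qed.

Lemma qsA a b v : qscale a (qscale b v) = qscale (a * b) v.
Proof. by case: (q_surj v) => x ->; rewrite !qscaleE scalerA. Qed.
Lemma qs1 : left_id 1 qscale.
Proof. by move=> v; case: (q_surj v) => x ->; rewrite !qscaleE scale1r. Qed.
Lemma qsDr : right_distributive qscale +%R.
Proof. by move=> r u v; case: (q_surj u) => x ->; case: (q_surj v) => y ->; rewrite -qD !qscaleE scalerDr qD. Qed.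
Lemma qsDl v : {morph qscale^~ v: a b / a + b}.
Proof. by move=> a b; case: (q_surj v) => x ->; rewrite !qscaleE scalerDl qD. Qed.
End Q.

HB.instance Definition _ R (A : dpalg R) := GRing.Zmodule_isLmodule.Build R (QQ A) (@qsA R A) (@qs1 R A) (@qsDr R A) (@qsDl R A).

Lemma qZ R (A : dpalg R) (r : R) (a : A) : q (r *: a) = r *: q a.
Proof. by rewrite -qscaleE. Qed.

Lemma qMn R (A : dpalg R) (a : A) n : q (a *+ n) = q a *+ n.
Proof. by elim: n => [|n IH]; rewrite ?q0 // !mulrS qD IH. Qed.

Section Gam.
Variables (R : comPzRingType) (A : dpalg R).
Local Notation g := (dp_gamma A).

Lemma g0 n : (0 < n)%N -> g n (0 : A) = 0.
Proof. by move=> n0; have := @dp_gammaZ _ A n 0 0 n0; rewrite scale0r expr0n gtn_eqF // scale0r. Qed.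

Lemma sq_prods n (a b : A) : in_sq (\sum_(1 <= i < n) dp_mul (g i a) (g (n - i) b)).
Proof. by apply: sq_sum => i; apply: sqM. Qed.

Lemma gD n (a b : A) : (0 < n)%N -> q (g n (a + b)) = q (g n a) + q (g n b).
Proof.
move=> n0; rewrite dp_gammaD // !qD.
by have /q_eq0 -> := sq_prods n a b; rewrite addr0.
Qed.

Lemma gZ n (r : R) (a : A) : (0 < n)%N -> q (g n (r *: a)) = r ^+ n *: q (g n a).
Proof. by move=> n0; rewrite dp_gammaZ // qZ. Qed.

Lemma g_sq n (s : A) : (1 < n)%N -> in_sq s -> in_sq (g n s).
Proof.
move=> n1 [t ->]; elim: t => [|x t IH].
  by rewrite big_nil g0 ?(ltnW n1) //; apply: sq0.
rewrite big_cons dp_gammaD ?(ltnW n1) //; apply: sqD => //; apply: sqD; last exact: sq_prods.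
rewrite dp_gammaZ ?(ltnW n1) // dp_gammaM ?(ltnW n1) //; apply: sqZ; exact: sqM.
Qed.

Lemma gW n (a b : A) : (0 < n)%N -> q a = q b -> q (g n a) = q (g n b).
Proof.
case: n => // -[|n] _ e; first by rewrite !dp_gamma1.
have -> : b = a + (b - a) by rewrite addrC subrK.
rewrite gD // ; have /q_eq0 -> : in_sq (g n.+2 (b - a)).
  by apply: g_sq => //; apply/q_eq; apply/esym.
by rewrite addr0.
Qed.

Lemma fact_p1 p : (0 < p)%N -> (p`! %/ (1`! * (p - 1)`!))%N = p.
Proof.
by case: p => // p _; rewrite factS subn1 /= mul1n mulnK // fact_gt0.
Qed.

Lemma g_tor_top n (a : A) : (1 < n)%N -> q (g n a) *+ n = 0.
Proof.
case: n => // -[|n] _ //.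
have := dp_gamma_mul a (isT : (1 <= 1)%N) (isT : (1 <= n.+1)%N).
have c : ((n.+2)`! %/ (1`! * (n.+1)`!))%N = n.+2.
  by have := fact_p1 (isT : (0 < n.+2)%N); rewrite subn1.
rewrite add1n c => e.
by rewrite -qMn -e; apply/q_eq0; apply: sqM.
Qed.

End Gam.

Section Gam2.
Variables (R : comPzRingType) (A : dpalg R).
Local Notation g := (dp_gamma A).

Lemma g_binC n m (a : A) : (0 < m)%N -> (m < n)%N -> q (g n a) *+ 'C(n, m) = 0.
Proof.
move=> m0 mn.
have := dp_gamma_mul a m0 (_ : (1 <= n - m)%N); rewrite subn_gt0 => /(_ mn).
rewrite subnKC ?(ltnW mn) // -bin_factd ?(ltn_trans m0 mn) // => e.
by rewrite -qMn -e; apply/q_eq0; apply: sqM.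
Qed.

Lemma Fp_dvd r t : prime r -> (t%:R : 'F_r) = 0 -> (r %| t)%N.
Proof.
move=> pr e; have := val_Fp_nat pr t; rewrite e /= => h.
by rewrite /dvdn -h.
Qed.

End Gam2.

Lemma nonpp_gcd n : (1 < n)%N -> ~ isPP n -> (\big[gcdn/0]_(i < n | (0 < i)%N) 'C(n, i))%N = 1%N.
Proof.
move=> n1 npp; set D := (\big[gcdn/0]_(i < n | (0 < i)%N) 'C(n, i))%N.
have Ddiv m : (0 < m)%N -> (m < n)%N -> (D %| 'C(n, m))%N.
  by move=> m0 mn; apply: (@biggcdn_inf _ (Ordinal mn)).
have Dn : (D %| n)%N by have := Ddiv 1%N isT n1; rewrite bin1.
have D0 : (0 < D)%N.
  by rewrite lt0n; apply/negP => /eqP D0; move: Dn; rewrite D0 dvd0n gtn_eqF // ltnW.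
case: (ltngtP D 1) => // [D1|D1].
  by move: D0; rewrite ltnNge -ltnS D1.
exfalso; set r := pdiv D.
have pr : prime r by apply: pdiv_prime.
have rD : (r %| D)%N by apply: pdiv_dvd.
have rn : (r %| n)%N by apply: dvdn_trans Dn.
set v := logn r n; set N := (r ^ v)%N.
have Nn : (N %| n)%N by apply: pfactor_dvdnn.
have N0 : (0 < N)%N by rewrite expn_gt0 prime_gt0.
set t := (n %/ N)%N.
have nt : n = (t * N)%N by rewrite divnK.
have v0 : (0 < v)%N by rewrite /v logn_gt0 mem_primes pr rn (ltnW n1).
have rt : ~~ (r %| t)%N.
  apply/negP => /dvdnP [d dt].
  have : (r ^ v.+1 %| n)%N.
    by rewrite nt dt expnSr -/N mulnC; apply: dvdn_mul => //; apply: dvdn_mull.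
  by rewrite pfactor_dvdn ?(ltnW n1) // ltnn.
have t1 : (1 < t)%N.
  case: t nt rt => [|[|t']] //.
    by rewrite mul0n => e; move: n1; rewrite e.
  rewrite mul1n => e; exfalso; apply: npp; exists r, v; split => //.
have Nlt : (N < n)%N by rewrite nt -{1}(mul1n N) ltn_mul2r N0 t1.
have rC : (r %| 'C(t * N, N))%N by rewrite -nt; apply: dvdn_trans (Ddiv N N0 Nlt).
have hx : (1 : 'F_r) *+ r = 0 by exact: pchar_Fp_0.
have := tor_Ccomp pr hx v t.
rewrite (tor_dvd hx rC) => /esym ht.
by move: rt; rewrite (Fp_dvd pr ht).
Qed.

Section Gam3.
Variables (R : comPzRingType) (A : dpalg R).
Local Notation g := (dp_gamma A).

Lemma g_npp n (a : A) : (1 < n)%N -> ~ isPP n -> q (g n a) = 0.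
Proof.
move=> n1 npp; rewrite -(mulr1n (q (g n a))) -(nonpp_gcd n1 npp).
apply: (big_ind (fun k => q (g n a) *+ k = 0)) => //.
  by move=> x y; apply: tor_gcd.
by move=> i i0; apply: g_binC.
Qed.
End Gam3.

Lemma Pc_coprime p j t : prime p -> coprime p (Pc (p ^ j) t).
Proof.
move=> pp; rewrite prime_coprime //; apply/negP => hd.
have hx : (1 : 'F_p) *+ p = 0 by exact: pchar_Fp_0.
have := tor_P pp hx j t; rewrite (tor_dvd hx hd) => /eqP.
by rewrite eq_sym oner_eq0.
Qed.

Section QU0.
Variables (R : comPzRingType) (A : dpalg R).
Local Notation g := (dp_gamma A).

Definition phiQ (n : nat) (y : QQ A) : QQ A := q (g n (repr y)).
Lemma phiQE n a : (0 < n)%N -> phiQ n (q a) = q (g n a).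
Proof. by move=> n0; apply: gW => //; rewrite q_repr. Qed.

Lemma phiQD p x y : prime p -> phiQ p (x + y) = phiQ p x + phiQ p y.
Proof.
move=> pp; have p0 := prime_gt0 pp.
case: (q_surj x) => a ->; case: (q_surj y) => b ->.
by rewrite -qD !phiQE // gD.
Qed.

Lemma phiQZ p (r : R) x : prime p -> phiQ p (r *: x) = r ^+ p *: phiQ p x.
Proof.
move=> pp; have p0 := prime_gt0 pp.
case: (q_surj x) => a ->.
by rewrite -qZ !phiQE // gZ.
Qed.

Lemma phiQ_char p x : prime p -> phiQ p x *+ p = 0.
Proof.
move=> pp; case: (q_surj x) => a ->.
by rewrite phiQE ?prime_gt0 // g_tor_top // prime_gt1.
Qed.

Lemma comp_mixed p p' (a : A) : prime p -> prime p' -> p != p' -> q (g p (g p' a)) = 0.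
Proof.
move=> pp pp' ne.
rewrite dp_gamma_comp ?prime_gt0 // qMn g_npp ?mul0rn //.
  by rewrite (@leq_trans p) // ?prime_gt1 // leq_pmulr // prime_gt0.
by have := notPP_mixed pp pp' ne (isT : (0 < 1)%N) (isT : (0 < 1)%N); rewrite !expn1.
Qed.

Lemma phiQC p p' x : prime p -> prime p' -> phiQ p (phiQ p' x) = phiQ p' (phiQ p x).
Proof.
move=> pp pp'; case: (q_surj x) => a ->.
rewrite !phiQE ?prime_gt0 //.
have [<-|ne] := eqVneq p p' => //.
by rewrite !comp_mixed // eq_sym.
Qed.

Definition QU : u0mod R := @U0Mod R (QQ A) phiQ phiQD phiQZ phiQ_char phiQC.

Lemma QU_phi p (a : A) : prime p -> u0_phi QU p (q a) = q (g p a).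
Proof. by move=> pp; apply: phiQE; apply: prime_gt0. Qed.

Lemma g_ppow p k (a : A) : prime p -> (0 < k)%N -> (q (g (p ^ k) a) : QU) = F p k (q a : QU).
Proof.
move=> pp; case: k => // k _; elim: k => [|k IH].
  by rewrite expn1 /F /= phiQE // prime_gt0.
rewrite [RHS]/F iterS -/(F p k.+1 (q a : QU)) -IH /QU /= phiQE ?expn_gt0 ?prime_gt0 //.
rewrite dp_gamma_comp ?expn_gt0 ?prime_gt0 // Pc_div ?expn_gt0 ?prime_gt0 //.
rewrite -expnS qMn.
set y := q (g (p ^ k.+2) a).
have e : y *+ Pc (p ^ k.+1) p = q (g p (g (p ^ k.+1) a)).
  by rewrite dp_gamma_comp ?expn_gt0 ?prime_gt0 // Pc_div ?expn_gt0 ?prime_gt0 // -expnS qMn.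
have h1 : y *+ (p ^ k.+2)%N = 0 by apply: g_tor_top; rewrite -(exp1n k.+2) ltn_exp2r // prime_gt1.
have h2 : y *+ (Pc (p ^ k.+1) p * p)%N = 0.
  rewrite mulrnA e.
  have := phiQ_char (q (g (p ^ k.+1) a)) pp.
  by rewrite phiQE ?expn_gt0 ?prime_gt0.
have hp : y *+ p = 0.
  have := tor_gcd h1 h2.
  rewrite expnSr -muln_gcdl.
  by rewrite (eqP (_ : coprime (p ^ k.+1) (Pc (p ^ k.+1) p))) ?mul1n // coprimeXl // Pc_coprime.
by rewrite (tor_P pp hp).
Qed.

End QU0.

Section Lin.
Variables (R : comPzRingType).

Lemma lin0 (U W : lmodType R) (f : U -> W) : is_Rlin f -> f 0 = 0.
Proof. by move=> [_ fZ]; rewrite -(scale0r (0 : U)) fZ scale0r. Qed.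

Lemma linB (U W : lmodType R) (f : U -> W) x y : is_Rlin f -> f (x - y) = f x - f y.
Proof. by move=> [fD fZ]; rewrite -scaleN1r fD fZ scaleN1r. Qed.

Lemma u0lin_F (M N : u0mod R) (k : M -> N) p n x : is_u0_lin k -> prime p ->
  k (F p n x) = F p n (k x).
Proof.
move=> [_ kphi] pp; elim: n => //= n IH.
by rewrite /F /= -/(F p n x) -/(F p n (k x)) kphi // IH.
Qed.

Lemma u0lin_zgam (M N : u0mod R) (k : M -> N) n x : is_u0_lin k -> (0 < n)%N ->
  k (zgam n x) = zgam n (k x).
Proof.
move=> kl n0; rewrite /zgam; case: ifP => // n1.
case: ifP => [/andP [n2 _]|_].
  by apply: u0lin_F => //; exact: pdiv_prime.
exact: lin0 kl.1.
Qed.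
End Lin.

Lemma h_sq R (A B : dpalg R) (h : A -> B) a : is_dp_morph h -> (forall x y : B, dp_mul x y = 0) ->
  in_sq a -> h a = 0.
Proof.
move=> [[hD hZ] [hM _]] B0 [s ->]; elim: s => [|x s IH].
  by rewrite big_nil; apply: lin0.
by rewrite big_cons hD IH hZ hM B0 scaler0 addr0.
Qed.

Unset Implicit Arguments.
Set Strict Implicit.

Theorem mainTheorem10 (R : comPzRingType) (V : lmodType R)
    (A : dpalg R) (i : V -> A) (M : u0mod R) (j : V -> M) :
  is_free_dp i -> is_u0_tensor j ->
  exists f : A -> M,
    [/\ is_Rlin f,
        (forall m : M, exists a : A, f a = m),
        (forall a : A, f a = 0 <-> in_sq a)
      & (forall (p : nat) (a : A), prime p -> f (dp_gamma A p a) = u0_phi M p (f a))].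
Proof.
move=> [iL freeA] [jL univM].
have [[h [hmor hi]] _] := freeA (zDP M) j jL.
have hL : is_Rlin (h : A -> M) := hmor.1.
have hg p a : prime p -> h (dp_gamma A p a) = u0_phi M p (h a).
  move=> pp; rewrite hmor.2.2 ?prime_gt0 // zDP_gamma.
  by have := zgam_pp (h a) pp (isT : (0 < 1)%N); rewrite expn1.
pose QUa := QU A.
have gL : is_Rlin (fun v => (q (i v) : QUa)).
  by split => [x y|r x]; rewrite ?iL.1 ?qD // iL.2 qZ.
have [[k [kL kj]] _] := univM QUa _ gL.
have kh : forall a, k (h a) = q a.
  have [_ uniq] := freeA (zDP QUa) _ gL.
  apply: (uniq (fun a => k (h a)) (fun a => q a)) => //.
  - split; first split.
    + by move=> x y; rewrite hL.1 kL.1.1.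
    + by move=> r x; rewrite hL.2 kL.1.2.
    split; first by move=> x y; rewrite hmor.2.1 zDP_mul; exact: lin0 kL.1.
    by move=> n x n0; rewrite hmor.2.2 // !zDP_gamma u0lin_zgam.
  - split; first split.
    + by move=> x y; rewrite qD.
    + by move=> r x; rewrite qZ.
    split; first by move=> x y; rewrite zDP_mul; apply/q_eq0; apply: sqM.
    move=> n x; case: n => // -[|n] _; first by rewrite dp_gamma1.
    rewrite zDP_gamma.
    case: (zgam_case QUa (isT : (1 < n.+2)%N)) => [[p [l [pp l0 e h']]]|[np h']].
      by rewrite h' e g_ppow.
    by rewrite h' g_npp.
  - by move=> v; rewrite hi.
pose fb (y : QUa) : M := h (repr y).
have fbq a : fb (q a) = h a.
  apply/eqP; rewrite -subr_eq0 -(linB _ _ hL); apply/eqP.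
  apply: (h_sq hmor) => //; apply/q_eq; exact: q_repr.
have fbL : is_u0_lin fb.
  split; first split.
  - move=> y1 y2; case: (q_surj y1) => a ->; case: (q_surj y2) => b ->.
    by rewrite -qD !fbq hL.1.
  - move=> r y; case: (q_surj y) => a ->.
    by rewrite -qZ !fbq hL.2.
  - move=> p y pp; case: (q_surj y) => a ->.
    by rewrite QU_phi // !fbq hg.
have fbk : forall m, fb (k m) = m.
  have [_ uniq] := univM M j jL.
  apply: (uniq (fun m => fb (k m)) id).
  - split; first split.
    + by move=> x y; rewrite kL.1.1 fbL.1.1.
    + by move=> r x; rewrite kL.1.2 fbL.1.2.
    by move=> p x pp; rewrite kL.2 // fbL.2.
  - by split; first split.
  - by move=> v; rewrite kj fbq hi.
  - by [].
exists h; split => //.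
- by move=> m; exists (repr (k m)); exact: fbk.
- move=> a; split => [h0|]; last by apply: (h_sq hmor).
  by apply/q_eq0; rewrite -kh h0; apply: lin0 kL.1.
Qed.
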